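(* Let $a\ge 2$ be even and let $c$ be an integer with $c\neq a$ and $\frac a2<c$. Then $U=\{(a,-a),(c,-c)\}\subseteq\mathcal{B}$ is unavoidable.
   Context: The bicyclic inverse semigroup is $\mathcal{B}=\{(a,b)\in\mathbb{Z}\times\mathbb{Z}\mid a\ge 0,\ a+b\ge 0\}$ with multiplication $(a,b)(c,d)=(\max\{c+d,a\}-d,\ b+d)$. A subset $U\subseteq\mathcal{B}$ is called avoidable if $\mathcal{B}$ can be partitioned into two subsets $A$ and $B$ such that no element of $U$ can be written as a product $xy$ of two distinct elements $x\neq y$ both in $A$, or both in $B$. A set is unavoidable if it is not avoidable. *)

(* Defs.v *)
From Stdlib Require Import ZArith.
Open Scope Z_scope.

(* The bicyclic inverse semigroup B = {(a,b) in Z x Z | a >= 0, a + b >= 0}. *)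
Definition inB (x : Z * Z) : Prop := 0 <= fst x /\ 0 <= fst x + snd x.

Definition bmul (x y : Z * Z) : Z * Z :=
  (Z.max (fst y + snd y) (fst x) - snd y, snd x + snd y).

(* U is avoidable: B can be partitioned into two sets A and B (encoded by a
   colouring col : elements of B -> bool, A = col^-1 true, B = col^-1 false)
   such that no u in U is a product xy of distinct x, y of the same colour. *)
Definition avoidable (U : Z * Z -> Prop) : Prop :=
  exists col : Z * Z -> bool,
    forall x y : Z * Z, inB x -> inB y -> x <> y -> col x = col y ->
      ~ U (bmul x y).

Definition unavoidable (U : Z * Z -> Prop) : Prop := ~ avoidable U.

(* Main.v *)
Require Import Defs.
From Stdlib Require Import ZArith Lia.
Open Scope Z_scope.

Theorem lemma3p2 (a c : Z) :
  2 <= a -> Z.Even a -> c <> a -> a < 2 * c ->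
  unavoidable (fun u => u = (a, - a) \/ u = (c, - c)).
Proof.
  intros Ha [k Hk] Hca Hac [col H].
  subst a.
  set (x1 := (k, - k)). set (x2 := (c - k, - (c - k))). set (y := (k + 1, - k)).
  assert (P1 : bmul x1 y = (2 * k, - (2 * k))).
  { unfold bmul, x1, y; cbn [fst snd]. f_equal; lia. }
  assert (P2 : bmul x2 y = (c, - c)).
  { unfold bmul, x2, y; cbn [fst snd]. f_equal; lia. }
  assert (P3 : bmul x1 x2 = (c, - c)).
  { unfold bmul, x1, x2; cbn [fst snd]. f_equal; lia. }
  assert (B1 : inB x1) by (unfold inB, x1; simpl; lia).
  assert (B2 : inB x2) by (unfold inB, x2; simpl; lia).
  assert (B3 : inB y) by (unfold inB, y; simpl; lia).
  assert (D12 : x1 <> x2) by (unfold x1, x2; intro E; injection E; lia).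
  assert (D1y : x1 <> y) by (unfold x1, y; intro E; injection E; lia).
  assert (D2y : x2 <> y) by (unfold x2, y; intro E; injection E; lia).
  destruct (col x1) eqn:E1, (col x2) eqn:E2, (col y) eqn:E3;
  first
    [ apply (H x1 x2 B1 B2 D12); [congruence | right; exact P3]
    | apply (H x1 y B1 B3 D1y); [congruence | left; exact P1]
    | apply (H x2 y B2 B3 D2y); [congruence | right; exact P2] ].
Qed.
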